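(* Let $\Delta\ge 4$ and $n\ge 3$ be integers. There exists a simple hamiltonian graph $G$ on $n$ vertices with maximum degree at most $\Delta$, diameter at most $2\,h(n,\Delta)$, and $$|E(G)|\le \Bigl(2-\frac{1}{\Delta-1}-\frac{(\Delta-2)^2}{(\Delta-1)^3}\Bigr)n+\frac{\Delta-3}{2}+2(\Delta-2).$$
   Context: Put $b=\Delta-1$. The complete $\Delta$-ary tree $T_{n,\Delta}$ is the rooted tree on vertex set $\{1,\dots,n\}$ with root $1$ in which the children of a vertex $i$ are the integers $j$ with $b(i-1)+2\le j\le bi+1$ and $j\le n$. Thus every vertex has at most $\Delta-1$ children, all levels except possibly the last are full, and the last level is filled from the left. The height $h(n,\Delta)$ of $T_{n,\Delta}$ is the largest distance from the root to a vertex. A graph is hamiltonian if it contains a cycle passing through every vertex exactly once; the diameter is the maximum graph distance between two vertices. *)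

(* Defs.v *)
From HB Require Import structures.
From mathcomp Require Import all_boot all_order all_algebra.
Set Implicit Arguments. Unset Strict Implicit. Unset Printing Implicit Defensive.
Import Order.TTheory GRing.Theory Num.Theory.

(* b = Delta - 1.  For a vertex j >= 2, its parent is the unique i with
   b(i-1)+2 <= j <= b i + 1, i.e. i = (j-2) %/ b + 1. *)
Definition tree_parent (D j : nat) : nat := (j - 2) %/ (D - 1) + 1.

(* distance from the root 1 to vertex j, computed by following parents
   (fuel j suffices since the parent of j >= 2 is < j when b >= 1) *)
Fixpoint tree_depth_aux (D fuel j : nat) : nat :=
  match fuel with
  | 0 => 0
  | f.+1 => if j <= 1 then 0 else (tree_depth_aux D f (tree_parent D j)).+1
  end.
Definition tree_depth (D j : nat) : nat := tree_depth_aux D j j.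

Definition tree_height (n D : nat) : nat := \max_(1 <= j < n.+1) tree_depth D j.

Definition simple_graph (n : nat) (e : rel 'I_n) : Prop :=
  (forall x, ~~ e x x) /\ (forall x y, e x y = e y x).

Definition deg (n : nat) (e : rel 'I_n) (x : 'I_n) : nat := #|[set y | e x y]|.

Definition num_edges (n : nat) (e : rel 'I_n) : nat :=
  #|[set p : 'I_n * 'I_n | (p.1 < p.2)%N && e p.1 p.2]|.

Definition hamiltonian (n : nat) (e : rel 'I_n) : Prop :=
  exists s : seq 'I_n, [/\ uniq s, size s = n & cycle e s].

Definition diam_le (n : nat) (e : rel 'I_n) (d : nat) : Prop :=
  forall x y : 'I_n, exists p : seq 'I_n,
    [/\ path e x p, last x p = y & (size p <= d)%N].

Local Open Scope ring_scope.
Definition edge_bound (D n : nat) : rat :=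
  (2 - 1 / (D%:R - 1) - (D%:R - 2) ^+ 2 / (D%:R - 1) ^+ 3) * n%:R
  + (D%:R - 3) / 2 + 2 * (D%:R - 2).

(* Main.v *)
Require Import Defs.
From HB Require Import structures.
From mathcomp Require Import all_boot all_order all_algebra zify ring lra.
Import Order.TTheory GRing.Theory Num.Theory.
Set Implicit Arguments. Unset Strict Implicit. Unset Printing Implicit Defensive.

Definition par (b j : nat) := (j - 2) %/ b + 1.
Definition pos (b j : nat) := (j - 2) %% b.
Definition chs (b n v : nat) := [seq j <- iota (v.-1 * b + 2) b | j <= n].
Fixpoint isAf (b f j : nat) : bool :=
  match f with
  | 0 => false
  | f'.+1 => if j <= 1 then false
             else (pos b j == 0) || ((pos b j == 1) && ~~ isAf b f' (par b j))
  end.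
Definition isA b j := isAf b j j.
Definition low b n v := n < v.-1 * b + 3.

Lemma divq b q r : 0 < b -> r < b -> (q * b + r) %/ b = q.
Proof. by move=> b0 rb; rewrite divnMDl // divn_small // addn0. Qed.
Lemma modq b q r : r < b -> (q * b + r) %% b = r.
Proof. by move=> rb; rewrite modnMDl modn_small. Qed.

Lemma par_lt b j : 0 < b -> 2 <= j -> par b j < j.
Proof.
move=> b0 j2; rewrite /par; have := leq_div (j - 2) b; lia.
Qed.
Lemma par_le b j : 0 < b -> 1 <= j -> par b j <= j.
Proof.
move=> b0 j1; case: (ltnP j 2) => j2; last by apply: ltnW; apply: par_lt.
have -> : j = 1 by lia. by rewrite /par div0n.
Qed.
Lemma par_ge1 b j : 1 <= par b j.
Proof. by rewrite /par addn1. Qed.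

Lemma isA_aux b f j : j <= 0 -> isAf b f j = false.
Proof. by case: f => //= f; case: j. Qed.

Lemma isAf_stable b f g j : 0 < b -> j <= f -> j <= g -> isAf b f j = isAf b g j.
Proof.
move=> b0; elim: f g j => [|f IH] g j.
  by move=> j0 _; rewrite /= isA_aux.
case: g => [|g] jf jg; first by rewrite !isA_aux.
rewrite /=; case: ifP => // j1.
rewrite (IH g) //; have := par_lt b0 (_ : 2 <= j); lia.
Qed.

Lemma isAE b j : 0 < b -> 2 <= j ->
  isA b j = (pos b j == 0) || ((pos b j == 1) && ~~ isA b (par b j)).
Proof.
move=> b0 j2; rewrite /isA; case: j j2 => // j j2 /=.
have -> : (j.+1 <= 1) = false by lia.
rewrite (@isAf_stable b j (par b j.+1)) //.
have := par_lt b0 j2; lia.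
Qed.

Lemma isA1 b j : j <= 1 -> isA b j = false.
Proof. by case: j => [|[|]]. Qed.

Lemma child_par b v i : 0 < b -> 1 <= v -> i < b -> par b (v.-1 * b + 2 + i) = v.
Proof.
move=> b0 v1 ib; rewrite /par.
have -> : v.-1 * b + 2 + i - 2 = v.-1 * b + i by rewrite addnAC addnK.
rewrite divq //; lia.
Qed.
Lemma child_pos b v i : i < b -> pos b (v.-1 * b + 2 + i) = i.
Proof.
move=> ib; rewrite /pos.
have -> : v.-1 * b + 2 + i - 2 = v.-1 * b + i by rewrite addnAC addnK.
by rewrite modq.
Qed.

Lemma mem_chs b n v c : c \in chs b n v = (v.-1 * b + 2 <= c < v.-1 * b + 2 + b) && (c <= n).
Proof. by rewrite mem_filter mem_iota andbC. Qed.

Lemma filter_none (s : seq nat) n : all (fun j => n < j) s -> [seq j <- s | j <= n] = [::].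
Proof. elim: s => //= x s IH /andP[h1 h2]; rewrite IH //; case: ifP => //; lia. Qed.

Lemma chs_spec b n v : 2 <= b ->
  chs b n v = if v.-1 * b + 2 <= n then v.-1 * b + 2 ::
      (if (v.-1 * b + 2).+1 <= n then (v.-1 * b + 2).+1 ::
          [seq j <- iota (v.-1 * b + 2).+2 (b-2) | j <= n] else [::])
    else [::].
Proof.
move=> b2; rewrite /chs.
set L := v.-1 * b + 2.
have -> : iota L b = L :: L.+1 :: iota L.+2 (b - 2).
  have e : b = (b - 2).+2 by lia.
  by rewrite {1}e.
have hL : forall k, n < L + k -> all (fun j => n < j) (iota (L + k) (b-2)).
  move=> k hk; apply/allP=> x; rewrite mem_iota; lia.
rewrite /=; case: ifP => h1; case: ifP => h2 //.
- by rewrite filter_none // -addn2; apply: hL; lia.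
- by move: h2 h1; lia.
- by rewrite filter_none // -addn2; apply: hL; lia.
Qed.

Lemma iter_ge1 b k x : 1 <= x -> 1 <= iter k (par b) x.
Proof. by case: k => //= k _; apply: par_ge1. Qed.
Lemma iter_le b k x : 0 < b -> 1 <= x -> iter k (par b) x <= x.
Proof.
move=> b0 x1; elim: k => //= k IH.
by apply: leq_trans (par_le b0 (@iter_ge1 b k x x1)) IH.
Qed.

Lemma sib b c c' i k x : 0 < b -> 2 <= c -> 2 <= c' -> par b c = par b c' ->
  iter i (par b) x = c -> iter k (par b) x = c' -> c = c'.
Proof.
move=> b0 c2 c'2 pe.
wlog ik : c c' i k c2 c'2 pe / i <= k.
  move=> W; case: (leqP i k) => h; first exact: W.
  move=> h1 h2; apply/esym; apply: (W c' c k i) => //; lia.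
move=> hi hk.
move: hk; rewrite -(subnK ik) iterD hi; case E: (k - i) => [//|d].
rewrite iterSr => hd; have := @iter_le b d (par b c) b0 (par_ge1 b c).
have := par_lt b0 c'2; lia.
Qed.

Fixpoint T (b n f v : nat) : seq nat :=
  match f with
  | 0 => [:: v]
  | f'.+1 =>
    if isA b v then v :: flatten (map (T b n f') (chs b n v))
    else match chs b n v with
         | [::] => [:: v]
         | c :: r => rev (T b n f' c) ++ v :: flatten (map (T b n f') r)
         end
  end.

Lemma chs_prop b n v c : 0 < b -> 1 <= v -> c \in chs b n v ->
  [/\ par b c = v, 2 <= c, c <= n & v < c].
Proof.
move=> b0 v1; rewrite mem_chs => /andP[/andP[h1 h2] h3].
have -> : c = v.-1 * b + 2 + (c - (v.-1 * b + 2)) by lia.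
rewrite child_par //; last by lia.
have : v.-1 <= v.-1 * b by rewrite leq_pmulr.
by split => //; lia.
Qed.

Lemma T_mem b n f v x : 0 < b -> 1 <= v <= n -> x \in T b n f v ->
  [/\ v <= x, x <= n & exists k, iter k (par b) x = v].
Proof.
move=> b0; elim: f v x => [|f IH] v x /andP[v1 vn] /=.
  by rewrite inE => /eqP ->; split => //; exists 0.
have hc : forall c, c \in chs b n v -> x \in T b n f c ->
   [/\ v <= x, x <= n & exists k, iter k (par b) x = v].
  move=> c hc hx; have [pc c2 cn vc] := chs_prop b0 v1 hc.
  have hcn : 1 <= c <= n by lia.
  have [h1 h2 [k hk]] := IH c x hcn hx.
  split => //; first by lia.
  by exists k.+1; rewrite iterS hk.
have hr : forall r, {subset r <= chs b n v} -> x \in flatten (map (T b n f) r) ->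
   [/\ v <= x, x <= n & exists k, iter k (par b) x = v].
  by move=> r sr /flatten_mapP[c cr xc]; apply: (hc c (sr c cr)).
case: ifP => _.
  rewrite inE => /orP[/eqP ->|]; first by split => //; exists 0.
  by apply: hr.
case E: (chs b n v) => [|c r].
  by rewrite inE => /eqP ->; split => //; exists 0.
rewrite mem_cat mem_rev inE => /orP[|/orP[/eqP ->|]].
- by apply: hc; rewrite E inE eqxx.
- by split => //; exists 0.
- by apply: hr => y yr; rewrite E inE yr orbT.
Qed.

Lemma uniq_flat b F (r : seq nat) v : 0 < b -> uniq r ->
  (forall c, c \in r -> uniq (F c)) -> (forall c, c \in r -> 2 <= c /\ par b c = v) ->
  (forall c x, c \in r -> x \in F c -> exists k, iter k (par b) x = c) ->
  uniq (flatten (map F r)).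
Proof.
move=> b0; elim: r => //= c r IH /andP[cr ur] hu hp hm.
rewrite cat_uniq hu ?inE ?eqxx //= IH //; last first.
- by move=> c' x h; apply: hm; rewrite inE h orbT.
- by move=> c' h; apply: hp; rewrite inE h orbT.
- by move=> c' h; apply: hu; rewrite inE h orbT.
rewrite andbT; apply/hasPn => x /flatten_mapP[c' c'r xc']; apply/negP => xc.
have [c2 pc] := hp c (mem_head _ _).
have c'in : c' \in c :: r by rewrite inE c'r orbT.
have [c'2 pc'] := hp c' c'in.
have [i hi] := hm c x (mem_head _ _) xc.
have [k hk] := hm c' x c'in xc'.
have e := sib b0 c2 c'2 (etrans pc (esym pc')) hi hk.
by move: cr; rewrite e c'r.
Qed.

Lemma chs_uniq b n v : uniq (chs b n v).
Proof. by rewrite filter_uniq // iota_uniq. Qed.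

Lemma T_uniq b n f v : 0 < b -> 1 <= v <= n -> uniq (T b n f v).
Proof.
move=> b0; elim: f v => [|f IH] v /andP[v1 vn] //=.
have hall : forall r, {subset r <= chs b n v} -> uniq r -> uniq (flatten (map (T b n f) r)).
  move=> r sr ur; apply: (@uniq_flat b _ r v) => //.
  - move=> c /sr hc; have [_ c2 cn vc] := chs_prop b0 v1 hc; apply: IH; lia.
  - by move=> c /sr hc; have [pc c2 cn vc] := chs_prop b0 v1 hc.
  - move=> c x /sr hc hx; have [_ c2 cn vc] := chs_prop b0 v1 hc.
    have hcn : 1 <= c <= n by lia.
    by have [_ _ ] := T_mem b0 hcn hx.
have nv : forall c, c \in chs b n v -> v \notin T b n f c.
  move=> c hc; apply/negP => hv; have [_ c2 cn vc] := chs_prop b0 v1 hc.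
  have hcn : 1 <= c <= n by lia.
  have [h _ _] := T_mem b0 hcn hv; lia.
case: ifP => _.
  rewrite /= hall // ?chs_uniq // andbT; apply/negP => /flatten_mapP[c hc hv].
  by move: hv; rewrite (negbTE (nv c hc)).
have := chs_uniq b n v.
case E: (chs b n v) => [|c r] //= /andP[cr ur].
have sr : {subset c :: r <= chs b n v} by rewrite E.
have nv' := nv.
have hc : c \in chs b n v by apply: sr; rewrite inE eqxx.
have [_ c2 cn vc] := chs_prop b0 v1 hc.
rewrite cat_uniq rev_uniq IH /=; last by lia.
rewrite hall //; last by move=> y yr; apply: sr; rewrite inE yr orbT.
rewrite andbT; apply/andP; split; last first.
  apply/negP => /flatten_mapP[c' c'r hv].
  have hc' : c' \in chs b n v by apply: sr; rewrite inE c'r orbT.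
  by move: hv; rewrite (negbTE (nv c' hc')).
apply/norP; split; first by rewrite mem_rev nv'.
apply/hasPn => x /flatten_mapP[c' c'r xc']; rewrite mem_rev; apply/negP => xc.
have hc' : c' \in chs b n v by apply: sr; rewrite inE c'r orbT.
have [pc' c'2 c'n vc'] := chs_prop b0 v1 hc'.
have [pc _ _ _] := chs_prop b0 v1 hc.
have hcn : 1 <= c <= n by lia.
have hcn' : 1 <= c' <= n by lia.
have [_ _ [i hi]] := T_mem b0 hcn xc.
have [_ _ [k hk]] := T_mem b0 hcn' xc'.
have e := sib b0 c2 c'2 (etrans pc (esym pc')) hi hk.
by move: cr; rewrite e c'r.
Qed.

Lemma T_self b n f v : v \in T b n f v.
Proof.
case: f => [|f] /=; first by rewrite inE.
case: ifP => _; first by rewrite inE eqxx.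
by case: (chs b n v) => [|c r]; rewrite ?inE // mem_cat inE eqxx orbT.
Qed.

Lemma T_sub b n f v c : c \in chs b n v -> {subset T b n f c <= T b n f.+1 v}.
Proof.
move=> hc x hx /=; case: ifP => _.
  by rewrite inE; apply/orP; right; apply/flatten_mapP; exists c.
move: hc; case: (chs b n v) => [|c1 r] //; rewrite inE => /orP[/eqP e|cr].
  by rewrite mem_cat mem_rev -e hx.
by rewrite mem_cat inE; apply/orP; right; apply/orP; right; apply/flatten_mapP; exists c.
Qed.

Lemma T_inv b n f v x : x \in T b n f.+1 v ->
  x = v \/ exists2 c, c \in chs b n v & x \in T b n f c.
Proof.
rewrite /=; case: ifP => _.
  rewrite inE => /orP[/eqP ->|/flatten_mapP[c hc hx]]; [by left|by right; exists c].
case E: (chs b n v) => [|c r]; first by rewrite inE => /eqP ->; left.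
rewrite mem_cat mem_rev inE => /orP[hx|/orP[/eqP ->|/flatten_mapP[c' hc hx]]].
- by right; exists c => //; rewrite inE eqxx.
- by left.
- by right; exists c' => //; rewrite inE hc orbT.
Qed.

Lemma T_closed b n f v x c : 0 < b -> 1 <= v <= n -> n < v + f ->
  x \in T b n f v -> c \in chs b n x -> c \in T b n f v.
Proof.
move=> b0; elim: f v x => [|f IH] v x /andP[v1 vn] hf; first by lia.
move/T_inv => [-> hc|[c' hc' hx] hc].
  by apply: (T_sub hc); apply: T_self.
have [_ c2 cn vc] := chs_prop b0 v1 hc'.
apply: (T_sub hc'); apply: (IH c' x) => //; lia.
Qed.

Lemma T_cover b n x : 0 < b -> 1 <= x <= n -> x \in T b n n 1.
Proof.
move=> b0; elim: x {-2}x (leqnn x) => [|m IH] x hx /andP[x1 xn]; first by lia.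
case: (ltnP x 2) => x2.
  have -> : x = 1 by lia.
  exact: T_self.
have pl := par_lt b0 x2.
have hp : par b x \in T b n n 1.
  apply: IH; first lia.
  by rewrite par_ge1 /=; lia.
apply: (T_closed b0 _ _ hp); first by lia.
  lia.
rewrite mem_chs.
have : (x - 2) %/ b * b <= x - 2 by apply: leq_trunc_div.
have : x - 2 < ((x - 2) %/ b).+1 * b by apply: ltn_ceil.
rewrite /par addn1 /=; lia.
Qed.

Definition tadj b (x y : nat) := (2 <= y) && (x == par b y).
Definition R b n (x y : nat) := [|| tadj b x y, tadj b y x | low b n x && low b n y].

Lemma R_sym b n x y : R b n x y = R b n y x.
Proof. by rewrite /R orbCA andbC orbA. Qed.

Lemma isA_child b v i : 0 < b -> 1 <= v -> i < b ->
  isA b (v.-1 * b + 2 + i) = (i == 0) || ((i == 1) && ~~ isA b v).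
Proof.
move=> b0 v1 ib; rewrite isAE ?child_pos ?child_par //; nia.
Qed.

Lemma chs_cases b n v : 2 <= b -> 1 <= v ->
  match chs b n v with
  | [::] => is_true (low b n v)
  | [:: c] => [/\ low b n v, isA b c & par b c = v]
  | c :: c2 :: r => [/\ ~~ low b n v, isA b c, par b c = v, par b c2 = v &
                       isA b c2 = ~~ isA b v /\ (forall x, x \in r -> ~~ isA b x)]
  end.
Proof.
move=> b2 v1; have b0 : 0 < b by lia.
rewrite chs_spec //; rewrite /low.
case: ifP => h1; last by lia.
have e0 := @isA_child b v 0 b0 v1 (ltnW b2).
have p0 := @child_par b v 0 b0 v1 (ltnW b2).
rewrite addn0 in e0 p0; rewrite e0 p0.
case: ifP => h2; last by split => //; lia.
have e1 := @isA_child b v 1 b0 v1 b2.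
have p1 := @child_par b v 1 b0 v1 b2.
rewrite addn1 in e1 p1; rewrite e1 p1.
split => //; first by lia.
split => //; move=> x; rewrite mem_filter mem_iota => /andP[_ /andP[hx1 hx2]].
have -> : x = v.-1 * b + 2 + (x - (v.-1 * b + 2)) by lia.
rewrite isA_child //; lia.
Qed.

Lemma chs_low b n v : 2 <= b -> 1 <= v -> low b n v = (size (chs b n v) <= 1).
Proof.
move=> b2 v1; have := chs_cases n b2 v1.
by case: (chs b n v) => [|c [|c2 r]] //= [] // /negbTE ->.
Qed.

Lemma rev_block b n h t : path (R b n) h t ->
  exists h' t', [/\ rev (h :: t) = h' :: t', path (R b n) h' t', h' = last h t & last h' t' = h].
Proof.
move=> p; rewrite (lastI h t) rev_rcons.
exists (last h t), (rev (belast h t)); split => //.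
  have E : (fun z => (R b n)^~ z) =2 R b n by move=> x y /=; exact: R_sym.
  by rewrite rev_path (eq_path E).
rewrite -[LHS]/(last h (last h t :: rev (belast h t))).
by rewrite -rev_rcons -lastI rev_cons last_rcons.
Qed.

Lemma path_flat b n x (r : seq nat) (F : nat -> seq nat) :
  (forall c, c \in r -> exists h t, [/\ F c = h :: t, path (R b n) h t, low b n h & low b n (last h t)]) ->
  low b n x -> path (R b n) x (flatten (map F r)) /\ low b n (last x (flatten (map F r))).
Proof.
elim: r x => [|c r IH] x hF lx //=.
have [h [t [e p lh lt]]] := hF c (mem_head _ _).
rewrite e cat_path last_cat /=.
have hF' : forall c', c' \in r -> exists h t, [/\ F c' = h :: t, path (R b n) h t, low b n h & low b n (last h t)].
  by move=> c' hc'; apply: hF; rewrite inE hc' orbT.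
have [i1 i2] := IH (last h t) hF' lt.
by rewrite i1 i2 p /R lx lh !orbT.
Qed.

Lemma T_shape b n f v : 2 <= b -> 1 <= v <= n -> n < v + f ->
  exists h t, [/\ T b n f v = h :: t, path (R b n) h t, low b n (last h t)
     & (if isA b v then h = v else low b n h)].
Proof.
move=> b2; have b0 : 0 < b by lia.
elim: f v => [|f IH] v /andP[v1 vn] hf; first by lia.
have hch : forall c, c \in chs b n v -> exists h t, [/\ T b n f c = h :: t, path (R b n) h t, low b n (last h t)
     & (if isA b c then h = c else low b n h)].
  move=> c hc; have [_ c2 cn vc] := chs_prop b0 v1 hc; apply: IH; lia.
have hB : forall r : seq nat, {subset r <= chs b n v} -> (forall x, x \in r -> ~~ isA b x) ->
   forall c, c \in r -> exists h t, [/\ T b n f c = h :: t, path (R b n) h t, low b n h & low b n (last h t)].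
  move=> r sr nr c hc; have [h [t [e p l hh]]] := hch c (sr c hc).
  by exists h, t; split => //; move: hh; rewrite (negbTE (nr c hc)).
have tv : forall c, c \in chs b n v -> R b n v c.
  by move=> c hc; have [pc c2 _ _] := chs_prop b0 v1 hc; rewrite /R /tadj c2 pc eqxx.
have := chs_cases n b2 v1.
rewrite /=; case: ifP => hA; case E: (chs b n v) => [|c [|c2 r]].
- by move=> lv; exists v, [::]; split.
- move=> [lv ic pc]; have hc : c \in chs b n v by rewrite E inE eqxx.
  have [h [t [e p l hh]]] := hch c hc.
  rewrite ic in hh; subst h.
  exists v, (c :: t); rewrite /= cats0 e; split => //.
  by rewrite /= p andbT tv.
- move=> [nlv ic pc pc2 [ic2 nr]]; have hc : c \in chs b n v by rewrite E inE eqxx.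
  have [h [t [e p l hh]]] := hch c hc.
  rewrite ic in hh; subst h.
  have s1 : {subset c2 :: r <= chs b n v} by move=> y hy; rewrite E inE hy orbT.
  have s2 : forall x, x \in c2 :: r -> ~~ isA b x.
    by move=> y; rewrite inE => /orP[/eqP ->|/nr //]; rewrite ic2 negbK.
  have hr := hB (c2 :: r) s1 s2.
  have [p2 l2] := @path_flat b n (last c t) _ (T b n f) hr l.
  exists v, (c :: t ++ flatten (map (T b n f) (c2 :: r))); rewrite /= e; split => //.
  + by rewrite /= cat_path p p2 tv.
  + by rewrite last_cat.
- by move=> lv; exists v, [::]; split.
- move=> [lv ic pc]; have hc : c \in chs b n v by rewrite E inE eqxx.
  have [h [t [e p l hh]]] := hch c hc.
  rewrite ic in hh; subst h.
  have [h' [t' [e' p' hh' lh']]] := rev_block p.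
  exists h', (t' ++ [:: v]); rewrite e e' /=; split => //.
  + by rewrite cat_path p' /= andbT R_sym lh' tv.
  + by rewrite last_cat.
  + by rewrite hh'.
- move=> [nlv ic pc pc2 [ic2 nr]]; have hc : c \in chs b n v by rewrite E inE eqxx.
  have hc2 : c2 \in chs b n v by rewrite E !inE eqxx orbT.
  have [h [t [e p l hh]]] := hch c hc.
  rewrite ic in hh; subst h.
  have [h2 [t2 [e2 p2 l2 hh2]]] := hch c2 hc2.
  rewrite ic2 /= in hh2; subst h2.
  have [h' [t' [e' p' hh' lh']]] := rev_block p.
  have s1 : {subset r <= chs b n v} by move=> y hy; rewrite E !inE hy !orbT.
  have hr := hB r s1 nr.
  have [p3 l3] := @path_flat b n (last c2 t2) _ (T b n f) hr l2.
  exists h', (t' ++ v :: c2 :: t2 ++ flatten (map (T b n f) r)); rewrite /= e e' e2 /=; split => //.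
  + by rewrite cat_path p' /= R_sym lh' tv // tv // cat_path p2 p3.
  + by rewrite last_cat /= last_cat.
  + by rewrite hh'.
Qed.

Definition adj (s : seq nat) x y :=
  exists s1 s2, s = s1 ++ x :: y :: s2 \/ s = s1 ++ y :: x :: s2.

Lemma adj_cat s s1 s2 x y : adj s x y -> adj (s1 ++ s ++ s2) x y.
Proof.
move=> [u1 [u2 [->|->]]]; exists (s1 ++ u1), (u2 ++ s2).
  by left; rewrite -!catA.
by right; rewrite -!catA.
Qed.

Lemma adj_rev s x y : adj s x y -> adj (rev s) x y.
Proof.
move=> [u1 [u2 [->|->]]]; exists (rev u2), (rev u1); rewrite rev_cat /= !rev_cons -!cats1 -!catA /=.
  by right.
by left.
Qed.

Lemma flat_split (F : nat -> seq nat) (r : seq nat) c : c \in r ->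
  exists s1 s2, flatten (map F r) = s1 ++ F c ++ s2.
Proof.
move/splitPr => [r1 r2]; exists (flatten (map F r1)), (flatten (map F r2)).
by rewrite map_cat flatten_cat.
Qed.

Lemma T_lift b n f v c x y : c \in chs b n v -> adj (T b n f c) x y -> adj (T b n f.+1 v) x y.
Proof.
move=> hc ha /=; case: ifP => _.
  have [s1 [s2 ->]] := flat_split (T b n f) hc.
  by rewrite -cat_cons catA -catA; apply: adj_cat.
case E: (chs b n v) => [|c1 r]; first by rewrite E in hc.
move: hc; rewrite E inE => /orP[/eqP e|hc].
  subst c1; rewrite -[rev _]cat0s -catA; apply: adj_cat; exact: adj_rev.
have [s1 [s2 ->]] := flat_split (T b n f) hc.
by rewrite -cat_cons catA; apply: adj_cat.
Qed.

Lemma T_adj b n f v j : 2 <= b -> 1 <= v <= n -> n < v + f ->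
  j \in T b n f v -> j != v -> isA b j -> adj (T b n f v) (par b j) j.
Proof.
move=> b2; have b0 : 0 < b by lia.
elim: f v => [|f IH] v /andP[v1 vn] hf; first by lia.
move/T_inv => [-> /eqP //|[c hc hj]] jv ij.
have [pc c2 cn vc] := chs_prop b0 v1 hc.
case: (eqVneq j c) => [ejc|njc]; last first.
  by apply: (T_lift hc); apply: IH => //; lia.
subst j; rewrite pc.
have hc1 : 1 <= c <= n by lia.
have hc3 : n < c + f by lia.
have [h [t [e _ _ hh]]] := @T_shape b n f c b2 hc1 hc3.
rewrite ij in hh; subst h.
have := chs_cases n b2 v1; rewrite /=; case: ifP => hA.
  move: hc; case E: (chs b n v) => [|c1 [|c2' r]] //.
  - rewrite inE => /eqP ec _; subst c1; rewrite /= e; exists [::], t; left; by rewrite cats0.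
  - rewrite !inE => /orP[/eqP ec|/orP[/eqP ec|hr]] [_ _ _ _ [ic2 nr]]. 
    + subst c1; rewrite /= e; exists [::], (t ++ flatten (map (T b n f) (c2' :: r))); by left.
    + by subst c2'; move: ij; rewrite ic2.
    + by move: ij; rewrite (negbTE (nr _ hr)).
move: hc; case E: (chs b n v) => [|c1 [|c2' r]] //.
- rewrite inE => /eqP ec _; subst c1; rewrite e rev_cons -cats1 -catA /=.
  by exists (rev t), [::]; right.
- rewrite !inE => /orP[/eqP ec|/orP[/eqP ec|hr]] [_ _ _ _ [ic2 nr]].
  + subst c1; rewrite e rev_cons -cats1 -catA /=.
    by exists (rev t), (flatten (map (T b n f) (c2' :: r))); right.
  + subst c2'; rewrite /= e.
    by exists (rev (T b n f c1)), (t ++ flatten (map (T b n f) r)); left.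
  + by move: ij; rewrite (negbTE (nr _ hr)).
Qed.

Definition acnt b m := \sum_(i < m.+1) (isA b i : nat).
Definition Pf b m := (m + b - 2) %/ b.
Definition Pg b m := (m + b - 3) %/ b.

Lemma acnt_le b m : acnt b m <= m.
Proof.
elim: m => [|m IH]; first by rewrite /acnt big_ord_recr big_ord0 /= ?isA1.
by rewrite /acnt big_ord_recr /= -/(acnt b m); case: (isA b _) => /=; lia.
Qed.

Lemma acnt_S b m : acnt b m.+1 = acnt b m + isA b m.+1.
Proof. by rewrite /acnt big_ord_recr. Qed.

Lemma divE b x q r : 0 < b -> r < b -> x = q * b + r -> x %/ b = q.
Proof. by move=> b0 rb ->; apply: divq. Qed.

Lemma acnt_rec b m : 3 <= b -> acnt b m + acnt b (Pg b m) = Pf b m + Pg b m.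
Proof.
move=> b3; have b0 : 0 < b by lia.
elim: m => [|m IH].
  rewrite /Pf /Pg (@divE b (0 + b - 2) 0 (b - 2)) //; try lia.
  rewrite (@divE b (0 + b - 3) 0 (b - 3)) //; try lia.
  by rewrite /acnt big_ord_recr big_ord0 /= ?isA1.
case: (ltnP m.+1 2) => m2.
  have -> : m = 0 by lia.
  rewrite /Pf /Pg (@divE b (1 + b - 2) 0 (b - 1)) //; try lia.
  rewrite (@divE b (1 + b - 3) 0 (b - 2)) //; try lia.
  by rewrite acnt_S /acnt big_ord_recr big_ord0 /= ?isA1.
have [t et] : exists t, m.+1 = t + 2 by exists (m.+1 - 2); lia.
rewrite acnt_S isAE // /pos /par et addnK.
have hm : m = t + 1 by lia.
rewrite /Pf /Pg hm in IH *; clear et hm m2.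
have e1 : t + 1 + b - 2 = t + b - 1 by lia.
have e2 : t + 1 + b - 3 = t + b - 2 by lia.
have e3 : t + 2 + b - 2 = t + b by lia.
have e4 : t + 2 + b - 3 = t + b - 1 by lia.
rewrite e1 e2 addn1 in IH; rewrite e3 e4.
have ht := divn_eq t b; have hr := @ltn_pmod t b b0.
move: ht hr; move: (t %/ b) (t %% b) => q r ht hr.
have d1 : (t + b) %/ b = q.+1 by apply: (@divE b _ _ r) => //; rewrite mulSn; lia.
rewrite d1 addn1.
case: (ltnP r 1) => r1.
  have r0 : r = 0 by lia.
  have d2 : (t + b - 1) %/ b = q by apply: (@divE b _ _ (b - 1)) => //; lia.
  have d3 : (t + b - 2) %/ b = q by apply: (@divE b _ _ (b - 2)) => //; lia.
  rewrite d2 d3 in IH *; rewrite r0 /=; lia.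
have d2 : (t + b - 1) %/ b = q.+1 by apply: (@divE b _ _ (r - 1)) => //; rewrite ?mulSn; lia.
rewrite d2 in IH *.
case: (ltnP r 2) => r2.
  have r1' : r = 1 by lia.
  have d3 : (t + b - 2) %/ b = q by apply: (@divE b _ _ (b - 1)) => //; lia.
  rewrite d3 in IH *; rewrite r1' /= addn1 (acnt_S b q); case: (isA b q.+1) => /=; lia.
have d3 : (t + b - 2) %/ b = q.+1 by apply: (@divE b _ _ (r - 2)) => //; rewrite ?mulSn; lia.
rewrite d3 in IH *.
have -> : (r == 0) = false by lia.
have -> : (r == 1) = false by lia.
by rewrite /=; lia.
Qed.

Lemma div_lo x b : 0 < b -> x - (b - 1) <= x %/ b * b.
Proof. move=> b0; have := divn_eq x b; have := @ltn_pmod x b b0.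
move: (x %/ b) (x %% b) => q r; nia. Qed.
Lemma div_hi x b : x %/ b * b <= x.
Proof. exact: leq_trunc_div. Qed.

Lemma acnt_lb b n : 3 <= b -> 3 <= n ->
  (b ^ 2 + (b - 1) ^ 2) * n <= b ^ 3 * acnt b n + 4 * b ^ 3.
Proof.
move=> b3 n3; have b0 : 0 < b by lia.
set y := Pg b n; set z := Pg b y.
have h1 := acnt_rec n b3; have h2 := acnt_rec y b3; have h3 := acnt_rec z b3.
have h4 := acnt_le b (Pg b z).
rewrite -/y in h1; rewrite -/z in h2.
set a := acnt b n in h1 *.
set X := Pf b n in h1; set Y := Pf b y in h2; set Z := Pf b z in h3.
have ha : X + y + Z <= a + Y + z by lia.
have hX : n - 1 <= X * b by have := div_lo (n + b - 2) b0; rewrite /X /Pf; lia.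
have hY : Y * b <= y + b - 2 by have := div_hi (y + b - 2) b; rewrite /Y /Pf; lia.
have hy : n - 2 <= y * b by have := div_lo (n + b - 3) b0; rewrite /y /Pg; lia.
have hz : z * b <= y + b - 3 by have := div_hi (y + b - 3) b; rewrite /z /Pg; lia.
have hZ : z - 1 <= Z * b by have := div_lo (z + b - 2) b0; rewrite /Z /Pf; lia.
clearbody a X Y Z y z; clear h1 h2 h3 h4.
nia.
Qed.

Lemma next_mid (s1 s2 : seq nat) x y : uniq (s1 ++ x :: y :: s2) ->
  next (s1 ++ x :: y :: s2) x = y.
Proof.
move=> u; rewrite next_nth mem_cat inE eqxx orbT.
have xs1 : x \notin s1 by move: u; rewrite cat_uniq /= => /and3P[_ /norP[]].
case: s1 xs1 u => [|h s1] xs1 u /=; first by rewrite eqxx.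
move: xs1; rewrite inE negb_or => /andP[hx xs1].
rewrite eq_sym (negbTE hx) index_cat (negbTE xs1) /= ?addn0.
by rewrite eqxx addn0 nth_cat ltnNge leqnSn /= subSn // subnn.
Qed.

Lemma next_neq (s : seq nat) u : uniq s -> 2 <= size s -> u \in s -> next s u != u.
Proof.
move=> us s2 us'; rewrite next_nth us'.
case: s us s2 us' => [//|h p] us s2 us'.
set i := index u (h :: p).
have hi : i < size (h :: p) by rewrite index_mem.
have hu : nth h (h :: p) i = u by rewrite nth_index.
case: (ltnP i (size p)) => hl.
  change (nth h (h :: p) i.+1 != u); rewrite -[X in _ != X]hu nth_uniq //=; lia.
rewrite nth_default //; rewrite -[X in _ != X]hu -[h]/(nth h (h :: p) 0) nth_uniq //=; move: s2 => /=; lia.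
Qed.

Lemma card_le_seq n (A : {set 'I_n}) (s : seq nat) :
  (forall y : 'I_n, y \in A -> (y : nat) \in s) -> #|A| <= size s.
Proof.
move=> h; rewrite cardE -(size_map val); apply: uniq_leq_size.
  by rewrite map_inj_uniq ?enum_uniq //; apply: val_inj.
by move=> z /mapP[y]; rewrite mem_enum => yA ->; apply: h.
Qed.

Definition Gr b (s : seq nat) u v :=
  [|| tadj b u v, tadj b v u, v == next s u | u == next s v].

Lemma Gr_sym b s u v : Gr b s u v = Gr b s v u.
Proof. by rewrite /Gr orbA (orbC (tadj b u v)) -orbA (orbC (v == _)). Qed.

Lemma child_range b u v : 0 < b -> 2 <= v -> u = par b v ->
  u.-1 * b + 2 <= v < u.-1 * b + 2 + b.
Proof.
move=> b0 v2 ->; rewrite /par addn1 /=.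
have := divn_eq (v - 2) b; have := @ltn_pmod (v - 2) b b0.
move: ((v - 2) %/ b) ((v - 2) %% b) => q r; nia.
Qed.

Fixpoint up b f j := match f with
  | 0 => [::]
  | f'.+1 => if j <= 1 then [::] else par b j :: up b f' (par b j) end.

Lemma tp_par b j : tree_parent b.+1 j = par b j.
Proof. by rewrite /tree_parent /par subn1. Qed.

Lemma size_up b f j : size (up b f j) = tree_depth_aux b.+1 f j.
Proof. by elim: f j => //= f IH j; case: ifP => //= _; rewrite IH tp_par. Qed.

Lemma last_up b f j : 0 < b -> 1 <= j <= f.+1 -> last j (up b f j) = 1.
Proof.
move=> b0; elim: f j => [|f IH] j hj /=; first by lia.
case: ifP => j1 /=; first by lia.
apply: IH; have := par_lt b0 (_ : 2 <= j); rewrite par_ge1 /=; lia.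
Qed.

Lemma path_up b f j : 0 < b -> 1 <= j ->
  path (fun u v => tadj b v u) j (up b f j) /\ all (fun u => 1 <= u <= j) (up b f j).
Proof.
move=> b0; elim: f j => [|f IH] j hj //=.
case: ifP => j1 //=.
have j2 : 2 <= j by lia.
have pl := par_lt b0 j2.
have [p a] := IH (par b j) (par_ge1 b j).
rewrite p /tadj j2 eqxx par_ge1 /= (ltnW pl); split => //.
by apply: sub_all a => u /andP[-> /= h]; lia.
Qed.

Definition E b s m : rel 'I_m.+1 := fun x y => Gr b s x.+1 y.+1.
Arguments E : clear implicits.

Lemma E_sym b s m : symmetric (E b s m).
Proof. by move=> x y; rewrite /E Gr_sym. Qed.

Lemma walk_root b s m (x : 'I_m.+1) : 0 < b ->
  exists p, [/\ path (E b s m) x p, last x p = ord0 & size p = tree_depth b.+1 x.+1].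
Proof.
move=> b0; pose f (u : nat) : 'I_m.+1 := inord u.-1.
have fx : f x.+1 = x by rewrite /f /= inord_val.
have [pu au] := @path_up b x.+1 x.+1 b0 (ltn0Sn _).
exists (map f (up b x.+1 x.+1)); split.
- rewrite -{1}fx path_map.
  apply: (sub_in_path (P := fun u => 1 <= u <= m.+1)) pu.
  + move=> u v /= hu hv h; rewrite /E /f !inordK; try lia.
    by rewrite !prednK ?(andP hu).1 ?(andP hv).1 // /Gr h orbT.
  + rewrite /= ?ltn0Sn ltn_ord /=; apply: sub_all au => u /andP[-> /=] h.
    have := ltn_ord x; lia.
- rewrite -{1}fx last_map last_up //=.
  by apply/val_inj; rewrite /= inordK.
- by rewrite size_map size_up.
Qed.

Lemma rev_walk (T : eqType) (e : rel T) x p : symmetric e -> path e x p ->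
  [/\ path e (last x p) (rev (belast x p)), last (last x p) (rev (belast x p)) = x
    & size (rev (belast x p)) = size p].
Proof.
move=> se hp; split.
- rewrite rev_path; move: hp; congr (is_true _); apply: eq_path => u v /=; exact: se.
- rewrite -[LHS]/(last x (last x p :: rev (belast x p))).
  by rewrite -rev_rcons -lastI rev_cons last_rcons.
- by rewrite size_rev size_belast.
Qed.

Lemma depth_le_height D n j : 1 <= j <= n -> tree_depth D j <= tree_height n D.
Proof.
move=> hj; rewrite /tree_height; apply: (leq_bigmax_seq j) => //.
by rewrite mem_index_iota; lia.
Qed.

Lemma diam_E b s m : 0 < b -> diam_le (E b s m) (2 * tree_height m.+1 b.+1).
Proof.
move=> b0 x y.
have [p1 [h1 l1 s1]] := walk_root s x b0.
have [p2 [h2 l2 s2]] := walk_root s y b0.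
have [r1 r2 r3] := rev_walk (@E_sym b s m) h2.
exists (p1 ++ rev (belast y p2)); split.
- by rewrite cat_path h1 l1 -l2 r1.
- by rewrite last_cat l1 -l2 r2.
- rewrite size_cat r3 s1 s2.
  have := @depth_le_height b.+1 m.+1 x.+1 (_ : 1 <= x.+1 <= m.+1).
  have := @depth_le_height b.+1 m.+1 y.+1 (_ : 1 <= y.+1 <= m.+1).
  by rewrite !ltn0Sn !ltn_ord => /(_ isT) h3 /(_ isT) h4; lia.
Qed.

Lemma deg_E b s m (x : 'I_m.+1) : 3 <= b -> uniq s ->
  (forall u, (u \in s) = (1 <= u <= m.+1)) -> cycle (R b m.+1) s ->
  deg (E b s m) x <= b.+1.
Proof.
move=> b3 us hs cs; have b0 : 0 < b by lia.
set u := x.+1.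
have us' : u \in s by rewrite hs /u ltn0Sn ltn_ord.
set L := u.-1 * b + 2.
have hch : forall v, tadj b u v -> v <= m.+1 -> L <= v < L + b.
  by move=> v /andP[v2 /eqP e] _; apply: child_range.
have hnb : forall y : 'I_m.+1, E b s m x y ->
    [\/ tadj b u y.+1, tadj b y.+1 u, y.+1 = next s u | y.+1 = prev s u].
  move=> y; rewrite /E /Gr -/u => /or4P[h|h|/eqP h|/eqP h].
  - by apply: Or41.
  - by apply: Or42.
  - by apply: Or43.
  - by apply: Or44; rewrite h prev_next.
have yl : forall y : 'I_m.+1, y.+1 <= m.+1 by move=> y; exact: ltn_ord.
rewrite /deg; case: (boolP (low b m.+1 u)) => lu.
  apply: (@leq_trans (size [:: (par b u).-1; L.-1; (next s u).-1; (prev s u).-1])); last by rewrite /=; lia.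
  apply: card_le_seq => y; rewrite inE => /hnb[h|/andP[_ /eqP h]|h|h]; rewrite !inE.
  - have := hch _ h (yl y); move: lu; rewrite /low -/L => lu hr.
    have -> : (y : nat) = L.-1 by move: (yl y) hr lu; rewrite /L; lia.
    by rewrite eqxx !orbT.
  - by rewrite -h eqxx.
  - by rewrite -h /= eqxx !orbT.
  - by rewrite -h /= eqxx !orbT.
apply: (@leq_trans (size ((par b u).-1 :: iota L.-1 b))); last by rewrite /= size_iota.
have hR : forall v, R b m.+1 u v -> tadj b u v || tadj b v u.
  by move=> v; rewrite /R (negbTE lu) /= orbF.
apply: card_le_seq => y; rewrite inE => hy.
have hy' : tadj b u y.+1 \/ tadj b y.+1 u.
  case/hnb: hy => [h|h|h|h]; [by left|by right| |].
  - by move: (hR _ (next_cycle cs us')); rewrite -h => /orP.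
  - have hp : R b m.+1 u (prev s u) by rewrite R_sym; exact: prev_cycle cs us'.
    by move: (hR _ hp); rewrite -h => /orP.
case: hy' => h; rewrite inE mem_iota.
- have := hch _ h (yl y); have : 2 <= L by rewrite /L; lia.
  move=> L2 hr; apply/orP; right; lia.
- by move: h => /andP[_ /eqP hh]; rewrite -hh /= eqxx.
Qed.

Lemma acnt_card b m : acnt b m.+1 = #|[set y : 'I_m.+1 | isA b y.+1]|.
Proof.
rewrite /acnt big_ord_recl /= add0n -sum1_card [RHS]big_mkcond /=.
by apply: eq_bigr => i _; rewrite inE; case: (isA b _).
Qed.

Lemma edges_E b s m : 3 <= b -> uniq s ->
  (forall u, (u \in s) = (1 <= u <= m.+1)) ->
  (forall j, 2 <= j <= m.+1 -> isA b j -> (next s (par b j) == j) || (next s j == par b j)) ->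
  num_edges (E b s m) + acnt b m.+1 + 1 <= 2 * m.+1.
Proof.
move=> b3 us hs hadj; have b0 : 0 < b by lia.
set n := m.+1.
pose ST := [set p : 'I_n * 'I_n | (p.1 < p.2) && (tadj b p.1.+1 p.2.+1 || tadj b p.2.+1 p.1.+1)].
pose SC := [set p : 'I_n * 'I_n | (p.1 < p.2) &&
   ((p.2.+1 == next s p.1.+1) || (p.1.+1 == next s p.2.+1))].
have hS : num_edges (E b s m) <= #|ST :|: SC|.
  apply: subset_leq_card; apply/subsetP => p; rewrite !inE /E /Gr.
  by case/andP => -> /or4P[]->; rewrite ?orbT.
have hT : #|ST| <= m.
  pose g (y : 'I_n) := (inord (par b y.+1).-1 : 'I_n, y).
  apply: (@leq_trans #|g @: [set~ ord0]|); last first.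
    by apply: leq_trans (leq_imset_card _ _) _; rewrite cardsC1 card_ord.
  apply: subset_leq_card; apply/subsetP => -[p1 p2]; rewrite inE /= => /andP[lt12 /orP[]] /andP[_ /eqP h].
  + apply/imsetP; exists p2; first by rewrite !inE; apply/eqP => e; move: lt12; rewrite e.
    rewrite /g -h /=; congr pair; apply/val_inj; rewrite /= inordK //; exact: ltnW (ltn_ord p1).
  + have := par_le b0 (ltn0Sn p1); rewrite -h; lia.
have hC : #|SC| <= n.
  pose w (z : 'I_n) := (inord (next s z.+1).-1 : 'I_n).
  pose g (z : 'I_n) := if z < w z then (z, w z) else (w z, z).
  apply: (@leq_trans #|g @: setT|); last by apply: leq_trans (leq_imset_card _ _) _; rewrite cardsT card_ord.
  apply: subset_leq_card; apply/subsetP => -[p1 p2]; rewrite inE /= => /andP[lt12 /orP[] /eqP h].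
  + apply/imsetP; exists p1 => //.
    have wp : w p1 = p2 by apply/val_inj; rewrite /w -h /= inordK //; exact: ltnW (ltn_ord p2).
    by rewrite /g wp lt12.
  + apply/imsetP; exists p2 => //.
    have wp : w p2 = p1 by apply/val_inj; rewrite /w -h /= inordK //; exact: ltnW (ltn_ord p1).
    by rewrite /g wp ltnNge (ltnW lt12).
have hI : acnt b n <= #|ST :&: SC|.
  pose h (y : 'I_n) := (inord (par b y.+1).-1 : 'I_n, y).
  have hinj : injective h by move=> y1 y2 [].
  rewrite acnt_card -(card_imset _ hinj).
  apply: subset_leq_card; apply/subsetP => p /imsetP[y]; rewrite inE => hy ->.
  have y2 : 2 <= y.+1 by case: (ltnP y.+1 2) => // hl; move: hy; rewrite isA1 //; lia.
  have pl := par_lt b0 y2; have p1 := par_ge1 b y.+1.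
  have e1 : (inord (par b y.+1).-1 : 'I_n).+1 = par b y.+1.
    rewrite inordK; first by lia.
    have := ltn_ord y; rewrite -/n; lia.
  rewrite !inE /= e1.
  have -> : par b y.+1 <= y by lia.
  rewrite /tadj y2 eqxx /=.
  have hy2 : 2 <= y.+1 <= m.+1 by rewrite y2 ltn_ord.
  by move: (hadj y.+1 hy2 hy); rewrite !(eq_sym y.+1) !(eq_sym (par b y.+1)).
have := cardsUI ST SC; rewrite /n in hC hI *.
move: (#|ST :|: SC|) (#|ST :&: SC|) (#|ST|) (#|SC|) hS hT hC hI => A1 A2 A3 A4; lia.
Qed.

Lemma final_aux (B N A n : rat) : (3 <= B)%R -> (N + A + 1 <= n + n)%R ->
  ((B * B + (B - 1) * (B - 1)) * n <= B * B * B * A + 4 * (B * B * B))%R ->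
  (N <= (2 - 1 / B - (B - 1) ^+ 2 / B ^+ 3) * n + (B - 2) / 2 + 2 * (B - 1))%R.
Proof.
move=> B3 h1 h2.
have B0 : (0 < B)%R by lra.
have hA : ((1 / B + (B - 1) ^+ 2 / B ^+ 3) * n <= A + 4)%R.
  have -> : ((1 / B + (B - 1) ^+ 2 / B ^+ 3) * n = ((B * B + (B - 1) * (B - 1)) * n) / (B * B * B))%R.
    by field; lra.
  by rewrite ler_pdivrMr ?mulr_gt0 //; lra.
lra.
Qed.

Lemma final_rat (k N A n : nat) : (N + A + 1 <= n + n)%N ->
  (((k + 3) * (k + 3) + (k + 2) * (k + 2)) * n <=
     (k + 3) * (k + 3) * (k + 3) * A + 4 * ((k + 3) * (k + 3) * (k + 3)))%N ->
  (N%:R <= edge_bound k.+4 n :> rat)%R.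
Proof.
move=> h1 h2.
move: h1 h2; rewrite -!(ler_nat rat) !natrD !natrM !natrD !natrM !natrD => h1 h2.
have hk : (0 <= k%:R :> rat)%R by [].
rewrite /edge_bound.
have -> : ((k.+4)%:R - 1 = k%:R + 3%:R :> rat)%R by rewrite -addn4 natrD; lra.
have -> : ((k.+4)%:R - 2 = (k%:R + 3%:R) - 1 :> rat)%R by rewrite -addn4 natrD; lra.
have -> : ((k.+4)%:R - 3 = (k%:R + 3%:R) - 2 :> rat)%R by rewrite -addn4 natrD; lra.
apply: (@final_aux _ _ A%:R); first by lra.
  by [].
have -> : ((k%:R + 3%:R) - 1 = k%:R + 2%:R :> rat)%R by lra.
lra.
Qed.

Theorem mainTheorem7 (D n : nat) :
  (4 <= D)%N -> (3 <= n)%N ->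
  exists e : rel 'I_n,
    [/\ simple_graph e, hamiltonian e,
        (forall x, (deg e x <= D)%N),
        diam_le e (2 * tree_height n D)
      & ((num_edges e)%:R <= edge_bound D n :> rat)%R].
Proof.
case: D => [|b] // D4; case: n => [|m] // n3.
have b3 : (3 <= b)%N by lia.
have b2 : (2 <= b)%N by lia.
have b0 : (0 < b)%N by lia.
pose s := T b m.+1 m.+1 1.
have h11 : (1 <= 1 <= m.+1)%N by [].
have hmem : forall u, (u \in s) = (1 <= u <= m.+1)%N.
  move=> u; apply/idP/idP => h.
    by have [h1 h2 _] := T_mem b0 h11 h; rewrite h1 h2.
  exact: T_cover.
have us : uniq s by apply: T_uniq.
have hsz : size s = m.+1.
  have hp : perm_eq s (iota 1 m.+1).
    apply: uniq_perm => //; first exact: iota_uniq.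
    by move=> u; rewrite hmem mem_iota; lia.
  by rewrite (perm_size hp) size_iota.
have hcyc : cycle (R b m.+1) s.
  have hf : (m.+1 < 1 + m.+1)%N by lia.
  have [h [t [e p l hh]]] := @T_shape b m.+1 m.+1 1 b2 h11 hf.
  have {}hh : low b m.+1 h by move: hh; rewrite /isA /=.
  rewrite -/s in e; rewrite e /= rcons_path p /=.
  by rewrite /R l hh !orbT.
have hadj : forall j, (2 <= j <= m.+1)%N -> isA b j ->
    (next s (par b j) == j) || (next s j == par b j).
  move=> j hj ij.
  have js : j \in s by rewrite hmem; lia.
  have j1 : j != 1 by apply/eqP => e; move: hj; rewrite e.
  have hf : (m.+1 < 1 + m.+1)%N by lia.
  have [s1 [s2 [e|e]]] := @T_adj b m.+1 m.+1 1 j b2 h11 hf js j1 ij.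
  - by have us' := us; rewrite /s e in us' *; rewrite next_mid // eqxx.
  - by have us' := us; rewrite /s e in us' *; rewrite next_mid // eqxx orbT.
exists (E b s m); split.
- split; last exact: E_sym.
  move=> x; rewrite /E /Gr; apply/negP => /or4P[| |/eqP h|/eqP h].
  + by move=> /andP[x2 /eqP e]; have := par_lt b0 x2; rewrite -e ltnn.
  + by move=> /andP[x2 /eqP e]; have := par_lt b0 x2; rewrite -e ltnn.
  + have xs : x.+1 \in s by rewrite hmem ltn0Sn ltn_ord.
    have s2 : (2 <= size s)%N by rewrite hsz; lia.
    by move: (next_neq us s2 xs); rewrite -h eqxx.
  + have xs : x.+1 \in s by rewrite hmem ltn0Sn ltn_ord.
    have s2 : (2 <= size s)%N by rewrite hsz; lia.
    by move: (next_neq us s2 xs); rewrite -h eqxx.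
- pose f (u : nat) : 'I_m.+1 := inord u.-1.
  have fK : forall u, u \in s -> (f u).+1 = u.
    move=> u; rewrite hmem => /andP[u1 um]; rewrite /f inordK; lia.
  exists (map f s); split.
  + rewrite map_inj_in_uniq // => u v hu hv e.
    by rewrite -(fK u hu) -(fK v hv) e.
  + by rewrite size_map.
  + rewrite cycle_map; apply: (sub_in_cycle (P := fun u => u \in s) (e := frel (next s))).
    * move=> u v hu hv /= /eqP h; rewrite /E /Gr (fK u hu) (fK v hv) -h eqxx.
      by rewrite !orbT.
    * by apply/allP.
    * exact: cycle_next.
- by move=> x; apply: deg_E.
- exact: diam_E.
- have he := @edges_E b s m b3 us hmem hadj.
  have ha := @acnt_lb b m.+1 b3 n3.
  have [k ek] : exists k, b = k + 3 by exists (b - 3); lia.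
  subst b.
  have -> : (k + 3).+1 = k.+4 by lia.
  have e1 : (k + 3 - 1 = k + 2)%N by lia.
  rewrite e1 !expnS expn0 !muln1 in ha.
  apply: (@final_rat k _ (acnt (k + 3) m.+1)); first by lia.
  by move: ha; rewrite -!mulnA.
Qed.
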